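(* Let $b_0:[t_0,T]\to\mathbb{R}$ be continuous and $b:[t_0,T]\to\mathbb{R}^3$ be given by $b(t)=\|b(t)\|\bigl(\sin\theta_b(t)\cos\varphi_b(t),\ \sin\theta_b(t)\sin\varphi_b(t),\ \cos\theta_b(t)\bigr)$ with $\|b(t)\|>0$ continuous and $\theta_b,\varphi_b$ continuously differentiable. Put $$\Omega_b(t)=\sqrt{\Bigl(\cos\theta_b(t)-\frac{\dot\varphi_b(t)}{2\|b(t)\|}\Bigr)^2+\sin^2\theta_b(t)},$$ assume $\Omega_b(t)>0$ on $[t_0,T]$, and assume that $$J_1:=\frac1{\Omega_b(t)}\Bigl(\cos\theta_b(t)-\frac{\dot\varphi_b(t)}{2\|b(t)\|}\Bigr),\qquad J_2:=\frac{\sin\theta_b(t)}{\Omega_b(t)}$$ are constant in $t$ (so $J_1^2+J_2^2=1$). Let $\gamma_b(t,t_0)=\int_{t_0}^t\|b(\tau)\|\Omega_b(\tau)d\tau$ and $\Delta(t)=\frac{\varphi_b(t)-\varphi_b(t_0)}2$, $\Sigma(t)=\frac{\varphi_b(t)+\varphi_b(t_0)}2$. Then for $H(t)=b_0(t)\mathbb{I}+b(t)\cdot\sigma$, $$U_H(t,t_0)=\exp\Bigl\{-i\int_{t_0}^tb_0(\tau)d\tau\Bigr\}\bigl(u_0(t,t_0)\mathbb{I}+i\,\tilde u(t,t_0)\cdot\sigma\bigr),$$ where $u_0=\cos\Delta\cos\gamma_b-J_1\sin\Delta\sin\gamma_b$, $\tilde u_1=-J_2\cos\Sigma\,\sin\gamma_b$,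 $\tilde u_2=-J_2\sin\Sigma\,\sin\gamma_b$, $\tilde u_3=-J_1\cos\Delta\sin\gamma_b-\sin\Delta\cos\gamma_b$ (with $\gamma_b=\gamma_b(t,t_0)$, $\Delta=\Delta(t)$, $\Sigma=\Sigma(t)$). Equivalently, $(u_0,\tilde u)$ is the solution of $\dot u_0=b\cdot\tilde u$, $\dot{\tilde u}=-u_0b+b\times\tilde u$, $u_0(t_0)=1$, $\tilde u(t_0)=0$; moreover for all $t_0\le s\le t\le T$ these functions satisfy $u_0(t,s)u_0(s,t_0)-\tilde u(t,s)\cdot\tilde u(s,t_0)=u_0(t,t_0)$ and $u_0(t,s)\tilde u(s,t_0)+u_0(s,t_0)\tilde u(t,s)-\tilde u(t,s)\times\tilde u(s,t_0)=\tilde u(t,t_0)$.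
   Context: $\sigma=(\sigma_1,\sigma_2,\sigma_3)$ are the Pauli matrices $\sigma_1=\begin{pmatrix}0&1\\1&0\end{pmatrix}$, $\sigma_2=\begin{pmatrix}0&-i\\i&0\end{pmatrix}$, $\sigma_3=\begin{pmatrix}1&0\\0&-1\end{pmatrix}$; $v\cdot\sigma=\sum_jv_j\sigma_j$; $\times$ is the vector product on $\mathbb{R}^3$; $\|\cdot\|$ the Euclidean norm. $\theta_b,\varphi_b$ are the polar and azimuthal spherical angles of $b(t)$. $U_H(t,t_0)$ is the solution of $i\frac{d}{dt}U_H(t,t_0)=H(t)U_H(t,t_0)$, $U_H(t_0,t_0)=\mathbb{I}$ on $\mathbb{C}^2$; $u_0(t,s),\tilde u(t,s)$ denote the same formulas with $t_0$ replaced by $s$. *)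

(* Defs.v *)
From Stdlib Require Import Reals.
From Coquelicot Require Import Coquelicot.
Open Scope R_scope.

Definition cont_in (a b : R) (f : R -> R) (t : R) : Prop :=
  filterlim f (within (fun s => a <= s <= b) (locally t)) (locally (f t)).

Definition is_deriv_in (a b : R) (f : R -> R) (t l : R) : Prop :=
  filterlim (fun s => (f s - f t) / (s - t))
    (within (fun s => a <= s <= b /\ s <> t) (locally t)) (locally l).

Definition is_cderiv_in (a b : R) (f : R -> C) (t : R) (l : C) : Prop :=
  is_deriv_in a b (fun s => fst (f s)) t (fst l) /\
  is_deriv_in a b (fun s => snd (f s)) t (snd l).

(* ---------- 2x2 complex matrices, indices false = 1, true = 2 ---------- *)
Definition mat2 := bool -> bool -> C.

Definition mid : mat2 := fun i j => if Bool.eqb i j then RtoC 1 else RtoC 0.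
Definition madd (A B : mat2) : mat2 := fun i j => Cplus (A i j) (B i j).
Definition mscale (c : C) (A : mat2) : mat2 := fun i j => Cmult c (A i j).
Definition mmul (A B : mat2) : mat2 :=
  fun i j => Cplus (Cmult (A i false) (B false j)) (Cmult (A i true) (B true j)).

Definition sigma1 : mat2 := fun i j =>
  match i, j with
  | false, true => RtoC 1 | true, false => RtoC 1 | _, _ => RtoC 0 end.
Definition sigma2 : mat2 := fun i j =>
  match i, j with
  | false, true => Copp Ci | true, false => Ci | _, _ => RtoC 0 end.
Definition sigma3 : mat2 := fun i j =>
  match i, j with
  | false, false => RtoC 1 | true, true => RtoC (-1) | _, _ => RtoC 0 end.

Definition dot_sigma (v1 v2 v3 : R) : mat2 :=
  madd (mscale (RtoC v1) sigma1)
       (madd (mscale (RtoC v2) sigma2) (mscale (RtoC v3) sigma3)).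

Definition cexpi (x : R) : C := (cos x, sin x).

Definition solves_schrodinger (a b : R) (H U : R -> mat2) : Prop :=
  (forall i j, U a i j = mid i j) /\
  (forall t, a <= t <= b -> forall i j,
     exists l : C, is_cderiv_in a b (fun s => U s i j) t l /\
                   Cmult Ci l = mmul (H t) (U t) i j).

Definition bvec1 (nb th ph : R -> R) (t : R) := nb t * sin (th t) * cos (ph t).
Definition bvec2 (nb th ph : R -> R) (t : R) := nb t * sin (th t) * sin (ph t).
Definition bvec3 (nb th ph : R -> R) (t : R) := nb t * cos (th t).

Definition Hmat (b0 nb th ph : R -> R) (t : R) : mat2 :=
  madd (mscale (RtoC (b0 t)) mid)
       (dot_sigma (bvec1 nb th ph t) (bvec2 nb th ph t) (bvec3 nb th ph t)).

(* Omega_b, with dph the derivative of ph *)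
Definition Omega_b (nb th dph : R -> R) (t : R) : R :=
  sqrt ((cos (th t) - dph t / (2 * nb t)) ^ 2 + (sin (th t)) ^ 2).

Definition gamma_b (nb th dph : R -> R) (t s : R) : R :=
  RInt (fun tau => nb tau * Omega_b nb th dph tau) s t.

Definition Delta (ph : R -> R) (t s : R) := (ph t - ph s) / 2.
Definition Sigma (ph : R -> R) (t s : R) := (ph t + ph s) / 2.

Definition u0 (J1 : R) (nb th ph dph : R -> R) (t s : R) : R :=
  cos (Delta ph t s) * cos (gamma_b nb th dph t s)
  - J1 * sin (Delta ph t s) * sin (gamma_b nb th dph t s).
Definition ut1 (J2 : R) (nb th ph dph : R -> R) (t s : R) : R :=
  - J2 * cos (Sigma ph t s) * sin (gamma_b nb th dph t s).
Definition ut2 (J2 : R) (nb th ph dph : R -> R) (t s : R) : R :=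
  - J2 * sin (Sigma ph t s) * sin (gamma_b nb th dph t s).
Definition ut3 (J1 : R) (nb th ph dph : R -> R) (t s : R) : R :=
  - J1 * cos (Delta ph t s) * sin (gamma_b nb th dph t s)
  - sin (Delta ph t s) * cos (gamma_b nb th dph t s).

Definition U_formula (J1 J2 t0 : R) (b0 nb th ph dph : R -> R) (t : R) : mat2 :=
  mscale (cexpi (- RInt b0 t0 t))
    (madd (mscale (RtoC (u0 J1 nb th ph dph t t0)) mid)
          (mscale Ci (dot_sigma (ut1 J2 nb th ph dph t t0)
                                (ut2 J2 nb th ph dph t t0)
                                (ut3 J1 nb th ph dph t t0)))).

(* Main.v *)
Require Import Defs.
From Stdlib Require Import Reals.
From Coquelicot Require Import Coquelicot.
From Stdlib Require Import Lra Nsatz.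
Open Scope R_scope.

Ltac tc := try (match goal with |- Filter _ => typeclasses eauto end).

Definition Dw (a b t : R) := fun s => a <= s <= b /\ s <> t.
Definition WF a b t := within (Dw a b t) (locally t).

Lemma WF_filter a b t : Filter (WF a b t).
Proof. apply within_filter, locally_filter. Qed.

Lemma lim_mult {T} (F : (T -> Prop) -> Prop) {FF : Filter F} f g x y :
  filterlim f F (locally x) -> filterlim g F (locally y) ->
  filterlim (fun s => f s * g s) F (locally (x * y)).
Proof.
  intros Hf Hg. eapply filterlim_comp_2; [exact Hf|exact Hg|].
  exact (@filterlim_mult R_AbsRing x y).
Qed.

Lemma lim_plus {T} (F : (T -> Prop) -> Prop) {FF : Filter F} f g x y :
  filterlim f F (locally x) -> filterlim g F (locally y) ->
  filterlim (fun s => f s + g s) F (locally (x + y)).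
Proof.
  intros Hf Hg. eapply filterlim_comp_2; [exact Hf|exact Hg|].
  exact (@filterlim_plus R_AbsRing R_NormedModule x y).
Qed.

Lemma lim_const {T} (F : (T -> Prop) -> Prop) {FF : Filter F} (c : R) :
  filterlim (fun _ => c) F (locally c).
Proof. apply filterlim_const. Qed.

Lemma lim_opp {T} (F : (T -> Prop) -> Prop) {FF : Filter F} f x :
  filterlim f F (locally x) -> filterlim (fun s => - f s) F (locally (- x)).
Proof.
  intros Hf. replace (- x) with ((-1) * x) by ring.
  apply filterlim_ext with (f := fun s => (-1) * f s). intros; ring.
  apply lim_mult; tc. apply lim_const; tc. exact Hf.
Qed.

Lemma lim_id a b t : filterlim (fun s => s) (WF a b t) (locally t).
Proof.
  intros P HP. unfold filtermap, WF, within. simpl.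
  apply filter_imp with (2 := HP). auto.
Qed.

Lemma deriv_lim a b f t l : is_deriv_in a b f t l ->
  filterlim f (WF a b t) (locally (f t)).
Proof.
  intros H. unfold is_deriv_in in H. change (filterlim (fun s => (f s - f t) / (s - t)) (WF a b t) (locally l)) in H.
  pose proof (WF_filter a b t).
  apply filterlim_within_ext with (f := fun s => f t + (s - t) * ((f s - f t)/(s - t))).
  { intros x [_ Hx]. field. lra. }
  cut (filterlim (fun s => f t + (s - t) * ((f s - f t) / (s - t))) (WF a b t) (locally (f t + (t - t) * l))).
  { replace (f t + (t - t) * l) with (f t) by ring. auto. }
  apply lim_plus; tc. apply lim_const; tc.
  apply lim_mult; tc; auto.
  apply lim_plus; tc. apply lim_id. apply lim_const; tc.
Qed.

Lemma D_unfold a b f t l : is_deriv_in a b f t l <->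
  filterlim (fun s => (f s - f t) / (s - t)) (WF a b t) (locally l).
Proof. reflexivity. Qed.

Lemma D_plus a b f g t l1 l2 : is_deriv_in a b f t l1 -> is_deriv_in a b g t l2 ->
  is_deriv_in a b (fun s => f s + g s) t (l1 + l2).
Proof.
  rewrite !D_unfold. intros H1 H2. pose proof (WF_filter a b t).
  apply filterlim_ext with (f := fun s => (f s - f t)/(s-t) + (g s - g t)/(s-t)).
  { intros; unfold Rdiv; ring. }
  apply lim_plus; tc; auto.
Qed.

Lemma D_scal a b f t l c : is_deriv_in a b f t l ->
  is_deriv_in a b (fun s => c * f s) t (c * l).
Proof.
  rewrite !D_unfold. intros H1. pose proof (WF_filter a b t).
  apply filterlim_ext with (f := fun s => c * ((f s - f t)/(s-t))).
  { intros; unfold Rdiv; ring. }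
  apply lim_mult; tc; auto. apply lim_const; tc.
Qed.

Lemma D_const a b t c : is_deriv_in a b (fun _ => c) t 0.
Proof.
  rewrite !D_unfold. pose proof (WF_filter a b t).
  apply filterlim_ext with (f := fun s => 0).
  { intros; unfold Rdiv; ring. }
  apply lim_const; tc.
Qed.

Lemma D_mult a b f g t l1 l2 : is_deriv_in a b f t l1 -> is_deriv_in a b g t l2 ->
  is_deriv_in a b (fun s => f s * g s) t (f t * l2 + g t * l1).
Proof.
  intros H1 H2. pose proof (deriv_lim _ _ _ _ _ H1) as Hc.
  rewrite !D_unfold in *. pose proof (WF_filter a b t).
  apply filterlim_ext with (f := fun s => f s * ((g s - g t)/(s-t)) + g t * ((f s - f t)/(s-t))).
  { intros; unfold Rdiv; ring. }
  apply lim_plus; tc; apply lim_mult; tc; auto. apply lim_const; tc.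
Qed.

Lemma D_ext a b f f' t l : (forall s, a <= s <= b -> f s = f' s) -> a <= t <= b ->
  is_deriv_in a b f t l -> is_deriv_in a b f' t l.
Proof.
  intros E Ht. rewrite !D_unfold. apply filterlim_within_ext.
  intros x [Hx _]. rewrite !E; auto.
Qed.

Lemma D_of_derive a b f t l : is_derive f t l -> is_deriv_in a b f t l.
Proof.
  intros H. apply is_derive_Reals in H.
  rewrite D_unfold. apply filterlim_locally. intros eps.
  destruct (H eps (cond_pos eps)) as [d Hd].
  unfold WF, within. exists d. intros y Hy [_ Hyt].
  change (Rabs (y - t) < d) in Hy.
  change (Rabs ((f y - f t)/(y - t) - l) < eps).
  specialize (Hd (y - t)). rewrite Rplus_minus in Hd.
  apply Hd; auto. lra.
Qed.

Lemma D_chain a b F dF g t l : is_derive F (g t) dF -> is_deriv_in a b g t l ->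
  is_deriv_in a b (fun s => F (g s)) t (dF * l).
Proof.
  intros HF Hg. pose proof (deriv_lim _ _ _ _ _ Hg) as Hc. pose proof (WF_filter a b t).
  set (y0 := g t) in *.
  set (h := fun y => if Req_EM_T y y0 then dF else (F y - F y0)/(y - y0)).
  assert (Hh : filterlim h (locally y0) (locally dF)).
  { apply is_derive_Reals in HF. apply filterlim_locally. intros eps.
    destruct (HF eps (cond_pos eps)) as [d Hd]. exists d. intros y Hy.
    change (Rabs (y - y0) < d) in Hy. change (Rabs (h y - dF) < eps).
    unfold h. destruct (Req_EM_T y y0).
    - rewrite Rminus_diag, Rabs_R0. apply cond_pos.
    - specialize (Hd (y - y0)). rewrite Rplus_minus in Hd.
      apply Hd; auto. lra. }
  rewrite D_unfold in *.
  apply filterlim_ext with (f := fun s => h (g s) * ((g s - g t)/(s - t))).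
  { intros s. unfold h. fold y0. destruct (Req_EM_T (g s) y0) as [E|E].
    - rewrite E. unfold Rdiv. ring.
    - destruct (Req_EM_T s t) as [E'|E']. { subst s. fold y0 in E. lra. }
      fold y0. field. split; lra. }
  apply lim_mult; tc; auto.
  eapply filterlim_comp; eauto.
Qed.

Lemma cR_mult (f g : R -> R) x : continuous f x -> continuous g x -> continuous (fun y => f y * g y) x.
Proof. intros; exact (@continuous_mult R_UniformSpace R_AbsRing f g x H H0). Qed.
Lemma cR_plus (f g : R -> R) x : continuous f x -> continuous g x -> continuous (fun y => f y + g y) x.
Proof. intros; exact (@continuous_plus R_UniformSpace R_AbsRing R_NormedModule f g x H H0). Qed.
Lemma cR_minus (f g : R -> R) x : continuous f x -> continuous g x -> continuous (fun y => f y - g y) x.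
Proof. intros; exact (@continuous_minus R_UniformSpace R_AbsRing R_NormedModule f g x H H0). Qed.
Lemma cR_const (c : R) x : continuous (fun _ : R => c) x.
Proof. apply continuous_const. Qed.

Definition clamp (a b x : R) := Rmax a (Rmin b x).

Lemma clamp_in a b x : a <= b -> a <= clamp a b x <= b.
Proof. intros. unfold clamp, Rmax, Rmin. repeat destruct Rle_dec; lra. Qed.

Lemma clamp_id a b x : a <= x <= b -> clamp a b x = x.
Proof. intros. unfold clamp, Rmax, Rmin. repeat destruct Rle_dec; lra. Qed.

Lemma clamp_lip a b x y : a <= b -> Rabs (clamp a b y - clamp a b x) <= Rabs (y - x).
Proof. intros. unfold clamp, Rmax, Rmin. repeat destruct Rle_dec; unfold Rabs; repeat destruct Rcase_abs; lra. Qed.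

Lemma cont_clamp a b f x : a <= b -> cont_in a b f (clamp a b x) ->
  continuous (fun y => f (clamp a b y)) x.
Proof.
  intros Hab H. unfold continuous. eapply filterlim_comp with (G := within (fun s => a <= s <= b) (locally (clamp a b x))).
  2: exact H.
  intros P [eps HP]. unfold filtermap. exists eps. intros y Hy.
  apply HP. 2: apply clamp_in; auto.
  change (Rabs (y - x) < eps) in Hy. change (Rabs (clamp a b y - clamp a b x) < eps).
  eapply Rle_lt_trans. apply clamp_lip; auto. auto.
Qed.

Lemma deriv_cont a b f t l : is_deriv_in a b f t l -> cont_in a b f t.
Proof.
  intros H. apply deriv_lim in H. unfold cont_in.
  apply filterlim_locally. intros eps. rewrite filterlim_locally in H.
  specialize (H eps). unfold WF, within, Dw in H. unfold within.
  apply filter_imp with (2 := H). intros s Hs Hab.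
  destruct (Req_EM_T s t). subst. apply ball_center. apply Hs; auto.
Qed.

Lemma deriv0_const a b f : a <= b -> (forall t, a <= t <= b -> is_deriv_in a b f t 0) ->
  forall x, a <= x <= b -> f x = f a.
Proof.
  intros Hab H x Hx.
  set (g := fun y => f (clamp a b y)).
  assert (Hg : forall y, a <= y <= b -> g y = f y). { intros; unfold g; rewrite clamp_id; auto. }
  destruct (MVT_gen g a x (fun _ => 0)) as [c [_ Hc]].
  - intros y Hy. rewrite Rmin_left in Hy by lra. rewrite Rmax_right in Hy by lra.
    apply is_derive_Reals. intros eps Heps.
    specialize (H y ltac:(lra)). rewrite D_unfold in H. rewrite filterlim_locally in H.
    destruct (H (mkposreal eps Heps)) as [d Hd].
    assert (Hpos : 0 < Rmin d (Rmin (y - a) (b - y))).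
    { apply Rmin_pos. apply cond_pos. apply Rmin_pos; lra. }
    exists (mkposreal _ Hpos). intros h Hh0 Hh. simpl in Hh.
    assert (Hh1 : Rabs h < d) by (eapply Rlt_le_trans; [exact Hh| apply Rmin_l]).
    assert (Hh2 : Rabs h < Rmin (y - a) (b - y)) by (eapply Rlt_le_trans; [exact Hh| apply Rmin_r]).
    assert (Hh3 : Rabs h < y - a) by (eapply Rlt_le_trans; [exact Hh2| apply Rmin_l]).
    assert (Hh4 : Rabs h < b - y) by (eapply Rlt_le_trans; [exact Hh2| apply Rmin_r]).
    assert (Hyh : a <= y + h <= b) by (apply Rabs_def2 in Hh3; apply Rabs_def2 in Hh4; lra).
    specialize (Hd (y + h)). 
    rewrite !Hg by lra.
    assert (Hb : ball y d (y + h)). { change (Rabs (y + h - y) < d). replace (y + h - y) with h by ring. auto. }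
    assert (Hn : y + h <> y) by (intro; apply Hh0; lra). specialize (Hd Hb (conj Hyh Hn)).
    change (Rabs ((f (y + h) - f y) / (y + h - y) - 0) < eps) in Hd.
    replace (y + h - y) with h in Hd by ring. exact Hd.
  - intros y Hy. rewrite Rmin_left in Hy by lra. rewrite Rmax_right in Hy by lra.
    apply continuity_pt_filterlim. apply cont_clamp; auto.
    apply deriv_cont with 0. apply H. apply clamp_in; auto.
  - rewrite <- (Hg x), <- (Hg a) by lra. lra.
Qed.

Lemma deriv_RInt a b f t : a <= t <= b -> (forall y, continuous (fun y => f (clamp a b y)) y) ->
  is_deriv_in a b (fun s => RInt f a s) t (f t).
Proof.
  intros Ht Hgc. assert (Hab : a <= b) by lra.
  set (g := fun y => f (clamp a b y)).
  apply D_ext with (f := fun s => RInt g a s); auto.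
  { intros s Hs. apply RInt_ext. intros x Hx. unfold g. rewrite clamp_id; auto.
    rewrite Rmin_left in Hx by lra. rewrite Rmax_right in Hx by lra. lra. }
  replace (f t) with (g t) by (unfold g; rewrite clamp_id; auto).
  apply D_of_derive. apply is_derive_RInt with a.
  - apply filter_forall. intros y. apply (RInt_correct (V:=R_CompleteNormedModule)). apply (ex_RInt_continuous (V:=R_CompleteNormedModule)). intros; auto.
  - auto.
Qed.

Lemma RInt_chasles_in a b f x y z : a <= x <= b -> a <= y <= b -> a <= z <= b ->
  (forall y, continuous (fun y => f (clamp a b y)) y) ->
  RInt f x y + RInt f y z = RInt f x z.
Proof.
  intros Hx Hy Hz Hgc. assert (Hab : a <= b) by lra.
  set (g := fun y => f (clamp a b y)).
  assert (E : forall u v, a <= u <= b -> a <= v <= b -> RInt f u v = RInt g u v).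
  { intros u v Hu Hv. apply RInt_ext. intros w Hw. unfold g. rewrite clamp_id; auto.
    unfold Rmin, Rmax in Hw; destruct Rle_dec in Hw; lra. }
  rewrite !E by auto.
  assert (Ex : forall u v, ex_RInt g u v).
  { intros. apply (ex_RInt_continuous (V:=R_CompleteNormedModule)). intros; apply Hgc. }
  exact (RInt_Chasles (V:=R_CompleteNormedModule) g x y z (Ex _ _) (Ex _ _)).
Qed.

Lemma D_eq a b f g t l l' : (forall s, f s = g s) -> l' = l -> is_deriv_in a b g t l ->
  is_deriv_in a b f t l'.
Proof.
  intros E El H. subst l'. rewrite D_unfold in *. apply filterlim_ext with (2 := H).
  intros; rewrite !E; auto.
Qed.

Lemma D_minus a b f g t l1 l2 : is_deriv_in a b f t l1 -> is_deriv_in a b g t l2 ->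
  is_deriv_in a b (fun s => f s - g s) t (l1 - l2).
Proof.
  intros H1 H2. apply D_eq with (g := fun s => f s + (-1) * g s) (l := l1 + (-1) * l2).
  intros; ring. ring. apply D_plus; auto. apply D_scal; auto.
Qed.

Lemma is_derive_cos' x : is_derive cos x (- sin x).
Proof. apply is_derive_Reals. apply derivable_pt_lim_cos. Qed.
Lemma is_derive_sin' x : is_derive sin x (cos x).
Proof. apply is_derive_Reals. apply derivable_pt_lim_sin. Qed.

Lemma D_cos a b f t l : is_deriv_in a b f t l -> is_deriv_in a b (fun s => cos (f s)) t (- sin (f t) * l).
Proof. intros; apply D_chain; auto. apply is_derive_cos'. Qed.
Lemma D_sin a b f t l : is_deriv_in a b f t l -> is_deriv_in a b (fun s => sin (f s)) t (cos (f t) * l).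
Proof. intros; apply D_chain; auto. apply is_derive_sin'. Qed.

Lemma Ci_eq (l z : C) : Cmult Ci l = z -> fst l = snd z /\ snd l = - fst z.
Proof. intros H. subst z. destruct l as [x y]. simpl. split; ring. Qed.

Definition Ej (U V : R -> mat2) (j : bool) (s : R) : R :=
  (fst (U s false j) - fst (V s false j)) * (fst (U s false j) - fst (V s false j)) +
  (snd (U s false j) - snd (V s false j)) * (snd (U s false j) - snd (V s false j)) +
  (fst (U s true j) - fst (V s true j)) * (fst (U s true j) - fst (V s true j)) +
  (snd (U s true j) - snd (V s true j)) * (snd (U s true j) - snd (V s true j)).

Lemma sq4 x y z w : 0 = x*x + y*y + z*z + w*w -> x = 0 /\ y = 0 /\ z = 0 /\ w = 0.
Proof.
  intros H. pose proof (Rle_0_sqr x). pose proof (Rle_0_sqr y). pose proof (Rle_0_sqr z). pose proof (Rle_0_sqr w).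
  unfold Rsqr in *.
  assert (x*x = 0) by lra. assert (y*y = 0) by lra. assert (z*z = 0) by lra. assert (w*w = 0) by lra.
  repeat split; [apply Rmult_integral in H4|apply Rmult_integral in H5|apply Rmult_integral in H6|apply Rmult_integral in H7]; tauto.
Qed.

Lemma uniq lo hi b0 nb th ph U V :
  solves_schrodinger lo hi (Hmat b0 nb th ph) U ->
  solves_schrodinger lo hi (Hmat b0 nb th ph) V ->
  forall t, lo <= t <= hi -> forall i j, U t i j = V t i j.
Proof.
  intros [U0 HU] [V0 HV] t Ht i j.
  assert (Hlh : lo <= hi) by lra.
  assert (Hd : forall s, lo <= s <= hi -> is_deriv_in lo hi (Ej U V j) s 0).
  { intros s Hs.
    destruct (HU s Hs false j) as [u0 [[Hu0r Hu0i] Eu0]].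
    destruct (HU s Hs true j) as [u1 [[Hu1r Hu1i] Eu1]].
    destruct (HV s Hs false j) as [w0 [[Hw0r Hw0i] Ew0]].
    destruct (HV s Hs true j) as [w1 [[Hw1r Hw1i] Ew1]].
    apply Ci_eq in Eu0, Eu1, Ew0, Ew1.
    unfold Ej. eapply D_eq. intros; reflexivity.
    2: repeat apply D_plus; apply D_mult; apply D_minus; eauto.
    destruct Eu0 as [A1 A2], Eu1 as [A3 A4], Ew0 as [A5 A6], Ew1 as [A7 A8].
    rewrite A1, A2, A3, A4, A5, A6, A7, A8.
    unfold Hmat, mmul, madd, mscale, dot_sigma, mid, sigma1, sigma2, sigma3. simpl. ring. }
  pose proof (deriv0_const lo hi (Ej U V j) Hlh Hd t Ht) as E.
  assert (E0 : Ej U V j lo = 0).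
  { unfold Ej. rewrite !U0, !V0. ring. }
  rewrite E0 in E. unfold Ej in E.
  symmetry in E. apply sq4 in E. destruct E as [X1 [X2 [X3 X4]]].
  destruct i.
  - destruct (U t true j), (V t true j). simpl in *. f_equal; lra.
  - destruct (U t false j), (V t false j). simpl in *. f_equal; lra.
Qed.
Definition quat := (R * R * R * R)%type.
Definition qmul (x y : quat) : quat :=
  let '(x0,x1,x2,x3) := x in let '(y0,y1,y2,y3) := y in
  (x0*y0 - (x1*y1+x2*y2+x3*y3), x0*y1 + y0*x1 - (x2*y3 - x3*y2),
   x0*y2+y0*x2 - (x3*y1 - x1*y3), x0*y3+y0*x3 - (x1*y2-x2*y1)).
Lemma qmul_assoc x y z : qmul (qmul x y) z = qmul x (qmul y z).
Proof. destruct x as [[[? ?] ?] ?], y as [[[? ?] ?] ?], z as [[[? ?] ?] ?]. simpl. f_equal; [f_equal; [f_equal|]|]; ring. Qed.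
Definition qone : quat := (1,0,0,0).
Lemma qmul_1l x : qmul qone x = x.
Proof. destruct x as [[[? ?] ?] ?]. simpl. f_equal; [f_equal; [f_equal|]|]; ring. Qed.
Definition Rz a : quat := (cos a, 0, 0, - sin a).
Definition Rzi a : quat := (cos a, 0, 0, sin a).
Definition Nq J1 J2 g : quat := (cos g, - J2 * sin g, 0, - J1 * sin g).
Definition Vq J1 J2 a b g : quat :=
  (cos (a - b) * cos g - J1 * sin (a - b) * sin g,
   - J2 * cos (a + b) * sin g,
   - J2 * sin (a + b) * sin g,
   - J1 * cos (a - b) * sin g - sin (a - b) * cos g).
Lemma Vq_fact J1 J2 a b g : Vq J1 J2 a b g = qmul (qmul (Rz a) (Nq J1 J2 g)) (Rzi b).
Proof. unfold Vq, Rz, Rzi, Nq. simpl. rewrite cos_minus, sin_minus, cos_plus, sin_plus.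
  f_equal; [f_equal; [f_equal|]|]; ring. Qed.
Lemma Rzi_Rz b : qmul (Rzi b) (Rz b) = qone.
Proof. unfold Rzi, Rz, qone. simpl. pose proof (sin2_cos2 b). unfold Rsqr in H.
  f_equal; [f_equal; [f_equal|]|]; nra. Qed.
Lemma Nq_add J1 J2 g1 g2 : J1*J1 + J2*J2 = 1 -> qmul (Nq J1 J2 g1) (Nq J1 J2 g2) = Nq J1 J2 (g1 + g2).
Proof. intros H. unfold Nq. simpl. rewrite cos_plus, sin_plus.
  f_equal; [f_equal; [f_equal|]|].
  - replace (sin g1 * sin g2) with ((J1*J1+J2*J2) * (sin g1 * sin g2)) by (rewrite H; ring). ring.
  - ring. - ring. - ring. Qed.
Lemma Vq_comp J1 J2 a b c g1 g2 : J1*J1 + J2*J2 = 1 ->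
  qmul (Vq J1 J2 a b g1) (Vq J1 J2 b c g2) = Vq J1 J2 a c (g1 + g2).
Proof. intros H. rewrite !Vq_fact.
  rewrite !qmul_assoc. rewrite <- (qmul_assoc (Rzi b)), Rzi_Rz, qmul_1l.
  rewrite <- (qmul_assoc (Nq J1 J2 g1)), Nq_add by auto. reflexivity. Qed.
Lemma ODE_alg cS sS cD sD cg sg J1 J2 w m :
  cS*cS + sS*sS = 1 -> cD*cD+sD*sD = 1 -> J1*J1+J2*J2 = 1 ->
  let v0 := cD*cg - J1*sD*sg in
  let v1 := -J2*cS*sg in let v2 := -J2*sS*sg in
  let v3 := -J1*cD*sg - sD*cg in
  let b1 := J2*w*(cS*cD - sS*sD) in let b2 := J2*w*(sS*cD+cS*sD) in let b3 := J1*w+m in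
  (-sD*m*cg - cD*sg*w - J1*(cD*m*sg + sD*cg*w) = b1*v1+b2*v2+b3*v3) /\
  (-J2*(-sS*m*sg + cS*cg*w) = -v0*b1 + (b2*v3 - b3*v2)) /\
  (-J2*(cS*m*sg + sS*cg*w) = -v0*b2 + (b3*v1 - b1*v3)) /\
  (-J1*(-sD*m*sg + cD*cg*w) - (cD*m*cg - sD*sg*w) = -v0*b3 + (b1*v2 - b2*v1)).
Proof.
  intros H1 H2 H3. cbv zeta.
  split; [|split; [|split]]; nsatz.
Qed.

Lemma cR_sq (f : R -> R) x : continuous f x -> continuous (fun y => f y ^ 2) x.
Proof. intros H. apply (continuous_ext (fun y => f y * f y)). intros y; simpl; ring. apply cR_mult; auto. Qed.
Lemma cR_div (f g : R -> R) x : continuous f x -> continuous g x -> g x <> 0 -> continuous (fun y => f y / g y) x.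
Proof. intros. unfold Rdiv. apply cR_mult; auto. apply continuous_Rinv_comp; auto. Qed.

Lemma cderiv_ext a b (f g : R -> C) t l : (forall s, f s = g s) -> is_cderiv_in a b g t l -> is_cderiv_in a b f t l.
Proof. intros E [H1 H2]. split; eapply D_eq; eauto; intros; rewrite E; reflexivity. Qed.

Lemma D_opp a b f t l : is_deriv_in a b f t l -> is_deriv_in a b (fun s => - f s) t (- l).
Proof. intros H. apply D_eq with (g := fun s => (-1) * f s) (l := (-1) * l). intros; ring. ring. apply D_scal; auto. Qed.

Lemma entry_deriv a b E dE zr zi dr di t : is_deriv_in a b E t dE -> is_deriv_in a b zr t dr -> is_deriv_in a b zi t di ->
 is_cderiv_in a b (fun s => (cos (E s) * zr s - sin (E s) * zi s, cos (E s) * zi s + sin (E s) * zr s)) t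
   (cos (E t) * dr + zr t * (- sin (E t) * dE) - (sin (E t) * di + zi t * (cos (E t) * dE)),
    cos (E t) * di + zi t * (- sin (E t) * dE) + (sin (E t) * dr + zr t * (cos (E t) * dE))).
Proof.
  intros HE Hr Hi. pose proof (D_cos a b E t dE HE) as Hc. pose proof (D_sin a b E t dE HE) as Hs. split; simpl.
  - apply D_minus. exact (D_mult _ _ _ _ _ _ _ Hc Hr). exact (D_mult _ _ _ _ _ _ _ Hs Hi).
  - apply D_plus. exact (D_mult _ _ _ _ _ _ _ Hc Hi). exact (D_mult _ _ _ _ _ _ _ Hs Hr).
Qed.

Theorem theorem3
  (t0 T : R) (b0 nb th ph dth dph : R -> R) (J1 J2 : R)
  (Hb0 : forall t, t0 <= t <= T -> cont_in t0 T b0 t)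
  (Hnb_pos : forall t, t0 <= t <= T -> 0 < nb t)
  (Hnb : forall t, t0 <= t <= T -> cont_in t0 T nb t)
  (Hth_d : forall t, t0 <= t <= T -> is_deriv_in t0 T th t (dth t))
  (Hdth : forall t, t0 <= t <= T -> cont_in t0 T dth t)
  (Hph_d : forall t, t0 <= t <= T -> is_deriv_in t0 T ph t (dph t))
  (Hdph : forall t, t0 <= t <= T -> cont_in t0 T dph t)
  (HOm : forall t, t0 <= t <= T -> 0 < Omega_b nb th dph t)
  (HJ1 : forall t, t0 <= t <= T ->
     (cos (th t) - dph t / (2 * nb t)) / Omega_b nb th dph t = J1)
  (HJ2 : forall t, t0 <= t <= T -> sin (th t) / Omega_b nb th dph t = J2) :
  let b1 := bvec1 nb th ph in
  let b2 := bvec2 nb th ph in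
  let b3 := bvec3 nb th ph in
  let v0 := u0 J1 nb th ph dph in
  let v1 := ut1 J2 nb th ph dph in
  let v2 := ut2 J2 nb th ph dph in
  let v3 := ut3 J1 nb th ph dph in
  (* U_H(t,t0) is given by the formula: the formula solves the Schroedinger
     equation and every solution coincides with it on [t0,T] *)
  solves_schrodinger t0 T (Hmat b0 nb th ph) (U_formula J1 J2 t0 b0 nb th ph dph) /\
  (forall U : R -> mat2, solves_schrodinger t0 T (Hmat b0 nb th ph) U ->
     forall t, t0 <= t <= T -> forall i j,
       U t i j = U_formula J1 J2 t0 b0 nb th ph dph t i j) /\
  (* (u0, ut) solves the real ODE system with initial data (1, 0) *)
  (v0 t0 t0 = 1 /\ v1 t0 t0 = 0 /\ v2 t0 t0 = 0 /\ v3 t0 t0 = 0) /\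
  (forall t, t0 <= t <= T ->
     is_deriv_in t0 T (fun s => v0 s t0) t
       (b1 t * v1 t t0 + b2 t * v2 t t0 + b3 t * v3 t t0) /\
     is_deriv_in t0 T (fun s => v1 s t0) t
       (- v0 t t0 * b1 t + (b2 t * v3 t t0 - b3 t * v2 t t0)) /\
     is_deriv_in t0 T (fun s => v2 s t0) t
       (- v0 t t0 * b2 t + (b3 t * v1 t t0 - b1 t * v3 t t0)) /\
     is_deriv_in t0 T (fun s => v3 s t0) t
       (- v0 t t0 * b3 t + (b1 t * v2 t t0 - b2 t * v1 t t0))) /\
  (* composition identities *)
  (forall s t, t0 <= s -> s <= t -> t <= T ->
     v0 t s * v0 s t0
       - (v1 t s * v1 s t0 + v2 t s * v2 s t0 + v3 t s * v3 s t0) = v0 t t0 /\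
     v0 t s * v1 s t0 + v0 s t0 * v1 t s
       - (v2 t s * v3 s t0 - v3 t s * v2 s t0) = v1 t t0 /\
     v0 t s * v2 s t0 + v0 s t0 * v2 t s
       - (v3 t s * v1 s t0 - v1 t s * v3 s t0) = v2 t t0 /\
     v0 t s * v3 s t0 + v0 s t0 * v3 t s
       - (v1 t s * v2 s t0 - v2 t s * v1 s t0) = v3 t t0).
Proof.
  cbv zeta.
  set (Gf := fun tau => nb tau * Omega_b nb th dph tau).
  assert (HGc : t0 <= T -> forall y, continuous (fun y => Gf (clamp t0 T y)) y).
  { intros Hle y. pose proof (clamp_in t0 T y Hle) as Hcl.
    assert (Cnb : continuous (fun y => nb (clamp t0 T y)) y) by (apply cont_clamp; auto).
    assert (Cdph : continuous (fun y => dph (clamp t0 T y)) y) by (apply cont_clamp; auto).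
    assert (Cth : continuous (fun y => th (clamp t0 T y)) y) by (apply cont_clamp; auto; eapply deriv_cont; eauto).
    unfold Gf, Omega_b. apply cR_mult; auto. apply continuous_sqrt_comp.
    apply cR_plus; apply cR_sq. apply cR_minus. apply continuous_cos_comp; auto.
    apply cR_div; auto. apply cR_mult; auto. apply cR_const.
    specialize (Hnb_pos _ Hcl). lra.
    apply continuous_sin_comp; auto. }
  assert (Hb0c : t0 <= T -> forall y, continuous (fun y => b0 (clamp t0 T y)) y).
  { intros Hle y. apply cont_clamp; auto. apply Hb0, clamp_in; auto. }
  assert (HJ : t0 <= T -> J1*J1 + J2*J2 = 1).
  { intros Hle. assert (Ht : t0 <= t0 <= T) by lra.
    rewrite <- (HJ1 t0 Ht), <- (HJ2 t0 Ht). pose proof (HOm t0 Ht) as HO.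
    unfold Omega_b in *.
    set (X := cos (th t0) - dph t0 / (2 * nb t0)) in *. set (Y := sin (th t0)) in *.
    assert (E : sqrt (X^2 + Y^2) * sqrt (X^2 + Y^2) = X^2 + Y^2).
    { apply sqrt_sqrt. nra. }
    set (O := sqrt (X^2 + Y^2)) in *.
    replace (X/O*(X/O) + Y/O*(Y/O)) with ((X^2+Y^2)/(O*O)) by (field; lra).
    rewrite E. field. rewrite <- E. intro Z. nra. }
  assert (Hb1 : forall t, t0 <= t <= T -> bvec1 nb th ph t = J2 * Gf t * cos (ph t)).
  { intros t Ht. rewrite <- (HJ2 t Ht). unfold Gf, bvec1. pose proof (HOm t Ht). field. lra. }
  assert (Hb2 : forall t, t0 <= t <= T -> bvec2 nb th ph t = J2 * Gf t * sin (ph t)).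
  { intros t Ht. rewrite <- (HJ2 t Ht). unfold Gf, bvec2. pose proof (HOm t Ht). field. lra. }
  assert (Hb3 : forall t, t0 <= t <= T -> bvec3 nb th ph t = J1 * Gf t + dph t / 2).
  { intros t Ht. rewrite <- (HJ1 t Ht). unfold Gf, bvec3. pose proof (HOm t Ht). pose proof (Hnb_pos t Ht). field. lra. }
  assert (dgam : forall t, t0 <= t <= T -> is_deriv_in t0 T (fun s => gamma_b nb th dph s t0) t (Gf t)).
  { intros t Ht. unfold gamma_b. apply deriv_RInt; auto. apply HGc. lra. }
  assert (dDel : forall t, t0 <= t <= T -> is_deriv_in t0 T (fun s => Defs.Delta ph s t0) t (dph t / 2)).
  { intros t Ht. eapply D_eq with (g := fun s => /2 * (ph s - ph t0)).
    intros; unfold Defs.Delta; field. 2: apply D_scal, D_minus; [apply Hph_d; auto| apply D_const].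
    field. }
  assert (dSig : forall t, t0 <= t <= T -> is_deriv_in t0 T (fun s => Defs.Sigma ph s t0) t (dph t / 2)).
  { intros t Ht. eapply D_eq with (g := fun s => /2 * (ph s + ph t0)).
    intros; unfold Defs.Sigma; field. 2: apply D_scal, D_plus; [apply Hph_d; auto| apply D_const].
    field. }
  assert (dE : forall t, t0 <= t <= T -> is_deriv_in t0 T (fun s => - RInt b0 t0 s) t (- b0 t)).
  { intros t Ht. eapply D_eq with (g := fun s => (-1) * RInt b0 t0 s).
    intros; ring. 2: apply D_scal, deriv_RInt; auto; apply Hb0c; lra. ring. }
  assert (Pyt : forall x, cos x * cos x + sin x * sin x = 1).
  { intros x. pose proof (sin2_cos2 x). unfold Rsqr in H. lra. }
  assert (ODE : forall t, t0 <= t <= T ->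
     is_deriv_in t0 T (fun s => u0 J1 nb th ph dph s t0) t
       (bvec1 nb th ph t * ut1 J2 nb th ph dph t t0 + bvec2 nb th ph t * ut2 J2 nb th ph dph t t0 + bvec3 nb th ph t * ut3 J1 nb th ph dph t t0) /\
     is_deriv_in t0 T (fun s => ut1 J2 nb th ph dph s t0) t
       (- u0 J1 nb th ph dph t t0 * bvec1 nb th ph t + (bvec2 nb th ph t * ut3 J1 nb th ph dph t t0 - bvec3 nb th ph t * ut2 J2 nb th ph dph t t0)) /\
     is_deriv_in t0 T (fun s => ut2 J2 nb th ph dph s t0) t
       (- u0 J1 nb th ph dph t t0 * bvec2 nb th ph t + (bvec3 nb th ph t * ut1 J2 nb th ph dph t t0 - bvec1 nb th ph t * ut3 J1 nb th ph dph t t0)) /\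
     is_deriv_in t0 T (fun s => ut3 J1 nb th ph dph s t0) t
       (- u0 J1 nb th ph dph t t0 * bvec3 nb th ph t + (bvec1 nb th ph t * ut2 J2 nb th ph dph t t0 - bvec2 nb th ph t * ut1 J2 nb th ph dph t t0))).
  { intros t Ht. assert (Hle : t0 <= T) by lra. pose proof (HJ Hle) as HJJ.
    assert (Eph : ph t = Defs.Sigma ph t t0 + Defs.Delta ph t t0) by (unfold Defs.Sigma, Defs.Delta; field).
    pose proof (ODE_alg (cos (Defs.Sigma ph t t0)) (sin (Defs.Sigma ph t t0)) (cos (Defs.Delta ph t t0)) (sin (Defs.Delta ph t t0))
       (cos (gamma_b nb th dph t t0)) (sin (gamma_b nb th dph t t0)) J1 J2 (Gf t) (dph t / 2) (Pyt _) (Pyt _) HJJ) as K.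
    cbv zeta in K. destruct K as [K1 [K2 [K3 K4]]].
    rewrite Hb1, Hb2, Hb3 by auto. rewrite Eph, cos_plus, sin_plus.
    split; [|split; [|split]].
    - eapply D_eq. intros; reflexivity.
      2: unfold u0; apply D_minus; [apply D_mult; [apply D_cos, dDel, Ht|apply D_cos, dgam, Ht] | apply D_mult; [apply D_scal, D_sin, dDel, Ht| apply D_sin, dgam, Ht]].
      unfold u0, ut1, ut2, ut3. lra.
    - eapply D_eq. intros; reflexivity.
      2: unfold ut1; apply D_mult; [apply D_scal, D_cos, dSig, Ht| apply D_sin, dgam, Ht].
      unfold u0, ut1, ut2, ut3. lra.
    - eapply D_eq. intros; reflexivity.
      2: unfold ut2; apply D_mult; [apply D_scal, D_sin, dSig, Ht| apply D_sin, dgam, Ht].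
      unfold u0, ut1, ut2, ut3. lra.
    - eapply D_eq. intros; reflexivity.
      2: unfold ut3; apply D_minus; [apply D_mult; [apply D_scal, D_cos, dDel, Ht|apply D_sin, dgam, Ht] | apply D_mult; [apply D_sin, dDel, Ht| apply D_cos, dgam, Ht]].
      unfold u0, ut1, ut2, ut3. lra. }
  assert (G0 : forall g, gamma_b nb th dph g g = 0).
  { intros g. unfold gamma_b. exact (RInt_point (V:=R_CompleteNormedModule) g _). }
  assert (Rb0 : RInt b0 t0 t0 = 0) by exact (RInt_point (V:=R_CompleteNormedModule) t0 _).
  assert (D0 : forall g, Defs.Delta ph g g = 0) by (intros; unfold Defs.Delta; field).
  assert (Init : u0 J1 nb th ph dph t0 t0 = 1 /\ ut1 J2 nb th ph dph t0 t0 = 0 /\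
                 ut2 J2 nb th ph dph t0 t0 = 0 /\ ut3 J1 nb th ph dph t0 t0 = 0).
  { unfold u0, ut1, ut2, ut3. rewrite G0, D0, cos_0, sin_0. repeat split; ring. }
  assert (Sch : solves_schrodinger t0 T (Hmat b0 nb th ph) (U_formula J1 J2 t0 b0 nb th ph dph)).
  { split.
    - intros i j. destruct Init as [I0 [I1 [I2 I3]]]. unfold U_formula. rewrite Rb0, I0, I1, I2, I3, Ropp_0.
      unfold cexpi. rewrite cos_0, sin_0.
      destruct i, j; unfold mid, dot_sigma, madd, mscale, sigma1, sigma2, sigma3, RtoC, Ci, Cmult, Cplus; simpl; f_equal; ring.
    - intros t Ht i j. destruct (ODE t Ht) as [O0 [O1 [O2 O3]]]. pose proof (dE t Ht) as HE.
      destruct i, j.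
      + pose proof (entry_deriv t0 T (fun s => - RInt b0 t0 s) (- b0 t) (fun s => u0 J1 nb th ph dph s t0) (fun s => - ut3 J1 nb th ph dph s t0) _ _ t HE (O0) (D_opp _ _ _ _ _ O3)) as K.
        eexists; split; [eapply cderiv_ext; [|exact K]; intros s; unfold Hmat, mmul, U_formula, dot_sigma, madd, mscale, mid, sigma1, sigma2, sigma3, cexpi, RtoC, Ci, Cmult, Cplus; simpl; f_equal; ring | unfold Hmat, mmul, U_formula, dot_sigma, madd, mscale, mid, sigma1, sigma2, sigma3, cexpi, RtoC, Ci, Cmult, Cplus; simpl; f_equal; ring].
      + pose proof (entry_deriv t0 T (fun s => - RInt b0 t0 s) (- b0 t) (fun s => - ut2 J2 nb th ph dph s t0) (fun s => ut1 J2 nb th ph dph s t0) _ _ t HE (D_opp _ _ _ _ _ O2) (O1)) as K.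
        eexists; split; [eapply cderiv_ext; [|exact K]; intros s; unfold Hmat, mmul, U_formula, dot_sigma, madd, mscale, mid, sigma1, sigma2, sigma3, cexpi, RtoC, Ci, Cmult, Cplus; simpl; f_equal; ring | unfold Hmat, mmul, U_formula, dot_sigma, madd, mscale, mid, sigma1, sigma2, sigma3, cexpi, RtoC, Ci, Cmult, Cplus; simpl; f_equal; ring].
      + pose proof (entry_deriv t0 T (fun s => - RInt b0 t0 s) (- b0 t) (fun s => ut2 J2 nb th ph dph s t0) (fun s => ut1 J2 nb th ph dph s t0) _ _ t HE (O2) (O1)) as K.
        eexists; split; [eapply cderiv_ext; [|exact K]; intros s; unfold Hmat, mmul, U_formula, dot_sigma, madd, mscale, mid, sigma1, sigma2, sigma3, cexpi, RtoC, Ci, Cmult, Cplus; simpl; f_equal; ring | unfold Hmat, mmul, U_formula, dot_sigma, madd, mscale, mid, sigma1, sigma2, sigma3, cexpi, RtoC, Ci, Cmult, Cplus; simpl; f_equal; ring].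
      + pose proof (entry_deriv t0 T (fun s => - RInt b0 t0 s) (- b0 t) (fun s => u0 J1 nb th ph dph s t0) (fun s => ut3 J1 nb th ph dph s t0) _ _ t HE (O0) (O3)) as K.
        eexists; split; [eapply cderiv_ext; [|exact K]; intros s; unfold Hmat, mmul, U_formula, dot_sigma, madd, mscale, mid, sigma1, sigma2, sigma3, cexpi, RtoC, Ci, Cmult, Cplus; simpl; f_equal; ring | unfold Hmat, mmul, U_formula, dot_sigma, madd, mscale, mid, sigma1, sigma2, sigma3, cexpi, RtoC, Ci, Cmult, Cplus; simpl; f_equal; ring]. }
  assert (Comp : forall s t, t0 <= s -> s <= t -> t <= T ->
     u0 J1 nb th ph dph t s * u0 J1 nb th ph dph s t0
       - (ut1 J2 nb th ph dph t s * ut1 J2 nb th ph dph s t0 + ut2 J2 nb th ph dph t s * ut2 J2 nb th ph dph s t0 + ut3 J1 nb th ph dph t s * ut3 J1 nb th ph dph s t0) = u0 J1 nb th ph dph t t0 /\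
     u0 J1 nb th ph dph t s * ut1 J2 nb th ph dph s t0 + u0 J1 nb th ph dph s t0 * ut1 J2 nb th ph dph t s
       - (ut2 J2 nb th ph dph t s * ut3 J1 nb th ph dph s t0 - ut3 J1 nb th ph dph t s * ut2 J2 nb th ph dph s t0) = ut1 J2 nb th ph dph t t0 /\
     u0 J1 nb th ph dph t s * ut2 J2 nb th ph dph s t0 + u0 J1 nb th ph dph s t0 * ut2 J2 nb th ph dph t s
       - (ut3 J1 nb th ph dph t s * ut1 J2 nb th ph dph s t0 - ut1 J2 nb th ph dph t s * ut3 J1 nb th ph dph s t0) = ut2 J2 nb th ph dph t t0 /\
     u0 J1 nb th ph dph t s * ut3 J1 nb th ph dph s t0 + u0 J1 nb th ph dph s t0 * ut3 J1 nb th ph dph t s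
       - (ut1 J2 nb th ph dph t s * ut2 J2 nb th ph dph s t0 - ut2 J2 nb th ph dph t s * ut1 J2 nb th ph dph s t0) = ut3 J1 nb th ph dph t t0).
  { intros s t Hs Hst HtT. assert (Hle : t0 <= T) by lra. pose proof (HJ Hle) as HJJ.
    assert (Hg : gamma_b nb th dph t t0 = gamma_b nb th dph t s + gamma_b nb th dph s t0).
    { pose proof (RInt_chasles_in t0 T Gf t0 s t ltac:(lra) ltac:(lra) ltac:(lra) (HGc Hle)) as C.
      unfold gamma_b. change (fun tau => nb tau * Omega_b nb th dph tau) with Gf. lra. }
    pose proof (Vq_comp J1 J2 (ph t / 2) (ph s / 2) (ph t0 / 2) (gamma_b nb th dph t s) (gamma_b nb th dph s t0) HJJ) as Q.
    unfold Vq, qmul in Q. injection Q as Q0 Q1 Q2 Q3.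
    unfold u0, ut1, ut2, ut3, Defs.Delta, Defs.Sigma. rewrite Hg.
    replace ((ph t - ph s) / 2) with (ph t / 2 - ph s / 2) by field.
    replace ((ph s - ph t0) / 2) with (ph s / 2 - ph t0 / 2) by field.
    replace ((ph t - ph t0) / 2) with (ph t / 2 - ph t0 / 2) by field.
    replace ((ph t + ph s) / 2) with (ph t / 2 + ph s / 2) by field.
    replace ((ph s + ph t0) / 2) with (ph s / 2 + ph t0 / 2) by field.
    replace ((ph t + ph t0) / 2) with (ph t / 2 + ph t0 / 2) by field.
    repeat split; lra. }
  split; [exact Sch|]. split.
  { intros U HU t Ht i j. exact (uniq t0 T b0 nb th ph U _ HU Sch t Ht i j). }
  split; [exact Init|]. split; [exact ODE|exact Comp].
Qed.
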